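(* Let $n\geq 3$. For all positive integers $i,j,r,s,t$, $$\frac{A_{i+j}}{A_s}\neq\frac{A_i}{A_t}+\frac{A_j}{A_r}.$$
   Context: The integers $A_i$ are defined by $A_0=0$, $A_1=1$, $A_{i+2}=nA_{i+1}-A_i$ for $i\geq0$. *)

(* Defs.v *)
From mathcomp Require Import all_boot all_order all_algebra.
Set Implicit Arguments. Unset Strict Implicit. Unset Printing Implicit Defensive.
Import Order.TTheory GRing.Theory Num.Theory.
Local Open Scope ring_scope.

Fixpoint A (n : int) (i : nat) : int :=
  match i with
  | 0%N => 0
  | 1%N => 1
  | (k.+1 as j).+1 => n * A n j - A n k
  end.

(* Main.v *)
Require Import Defs.
From mathcomp Require Import all_boot all_order all_algebra zify ring lra.
Import Order.TTheory GRing.Theory Num.Theory.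
Set Implicit Arguments. Unset Strict Implicit.
Local Open Scope ring_scope.

Section S.
Variable n : int.
Hypothesis hn : 3 <= n.

Lemma A_rec m : A n m.+2 = n * A n m.+1 - A n m.
Proof. by []. Qed.

Lemma A_grow m : 0 <= A n m /\ 2 * A n m + 1 <= A n m.+1.
Proof.
elim: m => [|m [IH1 IH2]]; first by split.
split; first lia.
rewrite A_rec. nia.
Qed.

Lemma A_ge0 m : 0 <= A n m. Proof. by case: (A_grow m). Qed.

Lemma A_lt m p : (m < p)%N -> 2 * A n m + 1 <= A n p.
Proof.
elim: p => [//|p IH]; rewrite ltnS leq_eqVlt => /orP [/eqP ->|h].
  by case: (A_grow p).
have := IH h; case: (A_grow p) => h1 h2; lia.
Qed.

Lemma A_le m p : (m <= p)%N -> A n m <= A n p.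
Proof.
rewrite leq_eqVlt => /orP [/eqP ->//|h]; have := A_lt h; have := A_ge0 m; lia.
Qed.

Lemma A_pos m : (0 < m)%N -> 0 < A n m.
Proof. move=> h; have := A_lt h; rewrite /=; lia. Qed.

Fixpoint V (k : nat) : int :=
  match k with 0%N => 2 | 1%N => n | (k'.+1 as j).+1 => n * V j - V k' end.

Lemma V_rec k : V k.+2 = n * V k.+1 - V k. Proof. by []. Qed.

Lemma V_grow k : (1 <= k)%N -> 0 <= V k /\ 2 * V k + 1 <= V k.+1.
Proof.
elim: k => [//|k IH] _.
case: k IH => [|k] IH.
  rewrite /=; split; first lia.
  have : 0 <= (n - 3) * (n + 1) by apply: mulr_ge0; lia.
  lia.
have [h1 h2] := IH isT; split; first lia.
rewrite (V_rec k.+1).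
move: h1 h2; set x := V k.+1; set y := V k.+2 => h1 h2.
have : 0 <= (n - 3) * y by apply: mulr_ge0; lia.
lia.
Qed.

Lemma V_step k : V k < V k.+1.
Proof. case: k => [|k]; first by rewrite /=; lia.
have [h1 h2] := V_grow (isT : (1 <= k.+1)%N); lia. Qed.

Lemma V_ltP a b : (a < b)%N -> V a < V b.
Proof.
elim: b => [//|b IH]; rewrite ltnS leq_eqVlt => /orP [/eqP ->|h].
  exact: V_step.
have := IH h; have := V_step b; lia.
Qed.

Lemma V_ge2 a : 2 <= V a.
Proof. case: a => [//|a]; have := V_ltP (ltn0Sn a); rewrite /=; lia. Qed.

Lemma V_big a b : (a < b)%N -> 2 * V a < V b + 2.
Proof.
case: a => [|a] h.
  have := V_ltP h; rewrite /=; lia.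
have [h1 h2] := V_grow (isT : (1 <= a.+1)%N).
have : (a.+2 <= b)%N by [].
rewrite leq_eqVlt => /orP [/eqP <-|h3]; first lia.
have := V_ltP h3; lia.
Qed.

Lemma V_uniq a b c d : V a + V b = V c + V d ->
  (a = c /\ b = d) \/ (a = d /\ b = c).
Proof.
have Vle : forall x y, (x <= y)%N -> V x <= V y.
  move=> x y; rewrite leq_eqVlt => /orP [/eqP ->//|h]; have := V_ltP h; lia.
have key : forall a b c d, (d <= c)%N -> (b <= a)%N -> V a + V b = V c + V d -> a = c.
  move=> a1 b1 c1 d1 hdc hba e.
  case: (ltngtP a1 c1) => // h.
  - have := V_big h; have := V_ge2 d1; have := Vle _ _ hba; lia.
  - have := V_big h; have := V_ge2 b1; have := Vle _ _ hdc; lia.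
have inj : forall x y, V x = V y -> x = y.
  move=> x y e; case: (ltngtP x y) => // h; have := V_ltP h; lia.
move=> e.
wlog hba : a b e / (b <= a)%N.
  move=> W; case: (leqP b a) => h; first exact: W.
  rewrite addrC in e; have [] := W b a e (ltnW h) => -[? ?]; subst; by [right|left].
wlog hdc : c d e / (d <= c)%N.
  move=> W; case: (leqP d c) => h; first exact: W.
  rewrite [V c + _]addrC in e; have [] := W d c e (ltnW h) => -[? ?]; subst; by [right|left].
have ac := key _ _ _ _ hdc hba e.
left; split => //; apply: inj; subst; lia.
Qed.

Definition Az (k : int) : int :=
  match k with Posz m => A n m | Negz m => - A n m.+1 end.

Lemma Az_nat m : Az m%:Z = A n m. Proof. by []. Qed.
Lemma Az_opp m : Az (- m%:Z) = - A n m.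
Proof. by case: m => [|m]; rewrite ?oppr0 // NegzE opprK. Qed.

Lemma Az_rec k : Az (k + 1) = n * Az k - Az (k - 1).
Proof.
case: k => m.
  have -> : Posz m + 1 = (m.+1)%:Z by lia.
  case: m => [|m]; first by rewrite sub0r (Az_opp 1) /=; lia.
  have -> : Posz m.+1 - 1 = m%:Z by lia.
  by rewrite !Az_nat A_rec.
rewrite NegzE.
have -> : - (m.+1)%:Z + 1 = - (m%:Z) by lia.
have -> : - (m.+1)%:Z - 1 = - (m.+2)%:Z by lia.
rewrite !Az_opp A_rec; lia.
Qed.

Lemma Az_rec' k : Az (k - 1) = n * Az k - Az (k + 1).
Proof. move: (Az_rec k); move: (Az (k + 1)) (Az (k - 1)) (Az k) => x y z; lia. Qed.

Lemma VA_id j t : V j * A n t = Az (t%:Z + j%:Z) + Az (t%:Z - j%:Z).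
Proof.
elim/ltn_ind: j => j IH.
case: j IH => [|[|j]] IH.
- have -> : t%:Z + 0%:Z = t%:Z by lia.
  rewrite Az_nat /=; lia.
- have e1 := Az_rec t%:Z; have e2 := Az_rec' t%:Z.
  change (Posz 1) with (1 : int).
  rewrite [V 1]/= -(Az_nat t). move: e1 e2.
  move: (Az (t%:Z + 1)) (Az (t%:Z - 1)) => x y; lia.
rewrite V_rec mulrBl -mulrA (IH j.+1) // (IH j) //.
have -> : t%:Z + (j.+2)%:Z = (t%:Z + (j.+1)%:Z) + 1 by lia.
have -> : t%:Z - (j.+2)%:Z = (t%:Z - (j.+1)%:Z) - 1 by lia.
rewrite (Az_rec (t%:Z + (j.+1)%:Z)) (Az_rec' (t%:Z - (j.+1)%:Z)).
have -> : t%:Z + (j.+1)%:Z - 1 = t%:Z + j%:Z by lia.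
have -> : t%:Z - (j.+1)%:Z + 1 = t%:Z - j%:Z by lia.
lia.
Qed.

Lemma prod1 a : (n ^+ 2 - 4) * A n a.+1 = V a.+2 - V a.
Proof.
elim/ltn_ind: a => a IH.
case: a IH => [|[|a]] IH.
- rewrite /=; lia.
- rewrite /=; lia.
have h1 := IH a.+1 (ltnSn _); have h2 := IH a (leqnSn _).
have h3 := congr1 (fun x => n * x) h1.
rewrite /= in h3.
rewrite (A_rec a.+1) (V_rec a.+2). have h4 := V_rec a.
move: h1 h2 h3 h4. move: (A n a.+2) (A n a.+1) (V a.+3) (V a.+1) (V a.+2) (V a) => x y z u v q.
lia.
Qed.

Lemma prodA b a : (n ^+ 2 - 4) * A n (a + b) * A n b = V (a + 2 * b) - V a.
Proof.
elim/ltn_ind: b a => b IH a.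
case: b IH => [|[|b]] IH.
- by rewrite addn0 /= mulr0 subrr.
- rewrite addn1 muln1 addn2 /= mulr1; exact: prod1.
have h1 := IH b.+1 (ltnSn _) a.+1.
have h2 := IH b (leqnSn _) a.+2.
have h3 := congr1 (fun x => n * x) h1.
rewrite /= in h3.
have e1 : (a.+1 + b.+1 = a + b.+2)%N by lia.
have e2 : (a.+2 + b = a + b.+2)%N by lia.
have e3 : (a.+1 + 2 * b.+1 = (a + 2 * b.+2).-1)%N by lia.
have e4 : (a.+2 + 2 * b = (a + 2 * b.+2).-2)%N by lia.
have e5 : (a + 2 * b.+2 = (a + 2 * b.+2).-2.+2)%N by lia.
rewrite e1 e3 in h1 h3; rewrite e2 e4 in h2.
rewrite A_rec.
have e6 : V (a + 2 * b.+2) = n * V (a + 2 * b.+2).-1 - V (a + 2 * b.+2).-2.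
  rewrite {1}e5 V_rec; congr (n * V _ - _); lia.
rewrite e6; have h4 := V_rec a.
move: h1 h2 h3 h4. move: (A n (a + b.+2)) (A n b.+1) (A n b) (V (a + 2 * b.+2).-1) (V (a + 2 * b.+2).-2) (V a.+1) (V a.+2) (V a) => x y z w u v q p.
lia.
Qed.

Lemma Az_oppz k : Az (- k) = - Az k.
Proof.
case: k => m; first by rewrite Az_opp.
by rewrite NegzE opprK Az_opp opprK.
Qed.

Lemma Az_add t j : Az (t%:Z + j%:Z) = A n (t + j).
Proof. by rewrite -PoszD. Qed.

Lemma Az_sub t j : Az (t%:Z - j%:Z) = if (j <= t)%N then A n (t - j) else - A n (j - t).
Proof.
case: leqP => h.
  have -> : t%:Z - j%:Z = (t - j)%N%:Z by lia.
  by [].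
have -> : t%:Z - j%:Z = - (j - t)%N%:Z by lia.
by rewrite Az_opp.
Qed.

Lemma VA t j : V j * A n t = A n (t + j) + (if (j <= t)%N then A n (t - j) else - A n (j - t)).
Proof. by rewrite VA_id Az_add Az_sub. Qed.

Lemma V_le k : (0 < k)%N -> V k <= n * A n k.
Proof.
case: k => [//|k] _.
have := VA 1 k.+1; rewrite mulr1.
have := A_ge0 k; have := A_ge0 (1 - k.+1).
have -> : (1 + k.+1 = k.+2)%N by lia.
rewrite subSS sub0n subn1 /=; case: ifP => _; lia.
Qed.

Lemma sgn1 j t s : (0 < j)%N -> (0 < t)%N -> (s < t + j)%N -> 2 * A n s < V j * A n t.
Proof.
move=> hj ht hs.
rewrite VA.
have hm : (t + j = (t + j - 2).+2)%N by lia.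
have h1 : A n s <= A n (t + j - 2).+1 by apply: A_le; lia.
have h2 := A_lt (ltnSn (t + j - 2)).
have h3 : 0 <= (n - 3) * A n (t + j - 2).+1 by apply: mulr_ge0; [lia|exact: A_ge0].
have h4 := A_ge0 (t - j).
have h5 : A n (j - t) <= A n (t + j - 2) by apply: A_le; lia.
rewrite hm A_rec. have h6 := A_ge0 (t + j - 2). move: h1 h2 h3 h4 h5 h6; move: (A n s) (A n (t + j - 2).+1) (A n (t + j - 2)) (A n (t - j)) (A n (j - t)) => a b c d e.
case: ifP => _; lia.
Qed.

Lemma sgn2 j t s : (0 < j)%N -> (0 < t)%N -> (t + j <= s)%N -> V j * A n t < 2 * A n s.
Proof.
move=> hj ht hs.
rewrite VA.
have h1 : A n (t + j) <= A n s by apply: A_le.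
have h2 : 2 * A n (t - j) + 1 <= A n (t + j) by apply: A_lt; lia.
have h3 : 2 * A n (j - t) + 1 <= A n (t + j) by apply: A_lt; lia.
have h4 := A_ge0 (t - j); have h5 := A_ge0 (j - t).
case: ifP => _; lia.
Qed.

Lemma sgn3 j t : V j * A n t <= 2 * A n (t + j).
Proof.
rewrite VA.
have h2 : A n (t - j) <= A n (t + j) by apply: A_le; lia.
have h4 := A_ge0 (t - j); have h5 := A_ge0 (j - t).
case: ifP => _; lia.
Qed.

Lemma prod_bound i r : (0 < i)%N -> (0 < r)%N -> (n ^+ 2 - 4) * (A n i * A n r) <= A n (i + r).+1.
Proof.
move=> hi hr.
have Vb : forall k, (1 <= k)%N -> V k <= A n k.+1.
  move=> k hk; have := VA 1 k; rewrite mulr1.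
  have -> : (1 + k = k.+1)%N by lia.
  have := A_ge0 (1 - k); have := A_ge0 (k - 1).
  have : (k <= 1)%N -> A n (1 - k) = 0 by move=> hk1; have -> : (1 - k = 0)%N by lia.
  case: ifP => h; lia.
wlog hri : i r hi hr / (r <= i)%N.
  move=> W; case: (leqP r i) => h; first exact: W.
  rewrite [A n i * _]mulrC addnC; exact: (W r i hr hi (ltnW h)).
have := prodA r (i - r).
have -> : (i - r + r = i)%N by lia.
have -> : (i - r + 2 * r = i + r)%N by lia.
have := V_ge2 (i - r); have := Vb (i + r)%N (ltn_addr _ hi).
rewrite mulrA; lia.
Qed.

Lemma VA_diff a b : V a * A n b - V b * A n a = 2 * Az (b%:Z - a%:Z).
Proof.
rewrite !VA_id -(opprB b%:Z a%:Z) Az_oppz [a%:Z + _]addrC.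
move: (Az (b%:Z + a%:Z)) (Az (b%:Z - a%:Z)) => x y; lia.
Qed.

Lemma VA_sum a b : V a * A n b + V b * A n a = 2 * A n (a + b).
Proof.
rewrite !VA_id -(opprB b%:Z a%:Z) Az_oppz [a%:Z + _]addrC Az_add addnC.
move: (Az (b%:Z - a%:Z)) => y; lia.
Qed.

Lemma key i j r s t : (0 < i)%N -> (0 < j)%N -> (0 < r)%N -> (0 < t)%N ->
  (s < t + j)%N -> (i + r <= s)%N ->
  A n i * A n r * (V j * A n t - 2 * A n s) + A n j * A n t * (V i * A n r - 2 * A n s) <> 0.
Proof.
move=> hi hj hr ht h1 h2 E.
have Ai := A_pos hi; have Aj := A_pos hj; have Ar := A_pos hr; have At := A_pos ht.
move: h2; rewrite leq_eqVlt => /orP [/eqP hs|hs].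
-
  subst s.
  have hsum := VA_sum i r.
  have hdiff := VA_diff j r.
  have E2 : A n i * (A n t * (V j * A n r - V r * A n j) - 2 * (A n r * A n (i + r))) = 0.
    have := congr1 (fun x => A n j * A n t * x) hsum.
    move: E; rewrite /=.
    move: (V j) (V i) (V r) => x y z.
    move: (A n i) (A n j) (A n r) (A n t) (A n (i + r)) => a b c d e.
    lia.
  have E3 : A n t * Az (r%:Z - j%:Z) = A n r * A n (i + r).
    move: E2 => /eqP; rewrite mulf_eq0 => /orP [/eqP h|/eqP h]; first lia.
    rewrite hdiff in h; lia.
  rewrite Az_sub in E3.
  have Air := A_pos (ltn_addr r hi).
  case: leqP hdiff E3 => hjr hdiff E3; last first.
    have := A_ge0 (j - r).
    have : 0 < A n r * A n (i + r) by apply: mulr_gt0.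
    move: E3; move: (A n (j - r)) (A n r * A n (i + r)) => x y; nia.
  have hk : (0 < r - j)%N.
    rewrite subn_gt0 ltn_neqAle hjr andbT; apply/eqP => ejr; subst j.
    rewrite subnn /= in E3.
    have : 0 < A n r * A n (i + r) by apply: mulr_gt0.
    lia.
  set k := (r - j)%N in E3 hk.
  have htk : (t = (t - k) + k)%N by rewrite /k; lia.
  have p1 := prodA k (t - k).
  have p2 := prodA r i.
  rewrite -htk in p1.
  have e : V (t - k + 2 * k) + V i = V (i + 2 * r) + V (t - k).
    have := congr1 (fun x => (n ^+ 2 - 4) * x) E3.
    move: p1 p2 => /=. rewrite [(i + r)%N]addnC.
    move: (V (t - k + 2 * k)) (V i) (V (i + 2 * r)) (V (t - k)) => a b c d.
    move: (n ^+ 2 - 4) (A n t) (A n k) (A n r) (A n (r + i)) => x y z w u.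
    lia.
  case: (V_uniq e) => -[e1 e2]; rewrite /k in e1 e2; lia.
- have b1 := V_le hj.
  have b2 := sgn3 i r.
  have b3 : 2 * A n (i + r) + 1 <= A n s by apply: A_lt.
  have b4 := prod_bound hi hr.
  have b5 : A n (i + r).+1 <= A n s by apply: A_le.
  have b6 : 0 <= (n - 3) * (n + 1) by apply: mulr_ge0; lia.
  have As : 0 < A n s by apply: A_pos; lia.
  set X := A n i * A n r in E b4.
  set Y := A n j * A n t in E.
  have HX : 0 < X by apply: mulr_gt0.
  have HY : 0 < Y by apply: mulr_gt0.
  have c1 : V j * A n t <= n * Y.
    rewrite /Y mulrA; apply: ler_wpM2r; [lia|exact: b1].
  have c2 : X * (V j * A n t - 2 * A n s) < X * (n * Y).
    rewrite ltr_pM2l //; lia.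
  have c3 : Y * (n * X) <= Y * (2 * A n s - V i * A n r).
    rewrite ler_pM2l //.
    have : n * X <= (n ^+ 2 - 4) * X by apply: ler_wpM2r; [lia| rewrite expr2; lia].
    rewrite addnC in b2; lia.
  move: E c2 c3; rewrite [V i * A n r]mulrC.
  move: (V j * A n t) (A n r * V i) => p q.
  lia.
Qed.

End S.
Lemma rat_eq (x y u v z w : rat) : y != 0 -> v != 0 -> w != 0 ->
  x / y = u / v + z / w -> x * v * w - y * (u * w + z * v) = 0.
Proof.
move=> hy hv hw e.
have -> : x = y * (u / v + z / w) by rewrite -e; field; rewrite hy.
by field; rewrite hv hw.
Qed.

Theorem lemma4p5 (n : int) (hn : 3 <= n) (i j r s t : nat)
  (hi : (0 < i)%N) (hj : (0 < j)%N) (hr : (0 < r)%N) (hs : (0 < s)%N) (ht : (0 < t)%N) :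
  (A n (i + j))%:~R / (A n s)%:~R
    <> (A n i)%:~R / (A n t)%:~R + (A n j)%:~R / (A n r)%:~R :> rat.
Proof.
move=> E.
have Ai := A_pos hn hi; have Aj := A_pos hn hj; have Ar := A_pos hn hr.
have As := A_pos hn hs; have At := A_pos hn ht.
have nz : forall x : int, 0 < x -> x%:~R != 0 :> rat by move=> x hx; rewrite intr_eq0; lia.
have := rat_eq (nz _ As) (nz _ At) (nz _ Ar) E.
rewrite -!intrM -!intrD -!intrM -intrB => /eqP; rewrite intr_eq0 => /eqP Eint.
have hsum := VA_sum hn i j.
have E2 : A n i * A n r * (V n j * A n t - 2 * A n s) + A n j * A n t * (V n i * A n r - 2 * A n s) = 0.
  move: Eint hsum.
  move: (V n i) (V n j) (A n i) (A n j) (A n r) (A n s) (A n t) (A n (i + j)) => a b c d e f g h.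
  lia.
case: (ltnP s (t + j)) => h1; case: (ltnP s (i + r)) => h2.
- rewrite addnC in h2; have := sgn1 hn hj ht h1; have := sgn1 hn hi hr h2.
  have : 0 < A n i * A n r by apply: mulr_gt0.
  have : 0 < A n j * A n t by apply: mulr_gt0.
  move: E2; move: (V n j * A n t) (V n i * A n r) (A n i * A n r) (A n j * A n t) (A n s) => a b c d e.
  nia.
- exact: (key hn hi hj hr ht h1 h2 E2).
- rewrite addnC in h2; rewrite addnC in h1.
  apply: (key hn hj hi ht hr h2 h1); rewrite addrC; exact: E2.
- rewrite addnC in h2; have := sgn2 hn hj ht h1; have := sgn2 hn hi hr h2.
  have : 0 < A n i * A n r by apply: mulr_gt0.
  have : 0 < A n j * A n t by apply: mulr_gt0.
  move: E2; move: (V n j * A n t) (V n i * A n r) (A n i * A n r) (A n j * A n t) (A n s) => a b c d e.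
  nia.
Qed.
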